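(* Let $q$ be a prime integer different from $p$. For every $0\le k\le r$, the ideal $\mathcal S^k(q)=[(q),(q),\dots,(q)]$ (with $(q)=qR_j$ in each $R_j$, $0\le j\le k$) is a prime ideal of $\Omega_{H_k}$.
   Context: Fix a prime $p$ and an integer $r\ge0$. For $0\le k\le r$ let $R_k$ be the commutative ring which is free as a $\mathbb{Z}$-module with basis $X_{k,0},\dots,X_{k,k}$ and multiplication $X_{k,i}X_{k,j}=p^{k-\max(i,j)}X_{k,\min(i,j)}$; thus $X_{k,k}=1$, and an integer $n$ is identified with $nX_{k,k}$. For $0\le k\le\ell\le r$ define: the additive map $\mathrm{ind}^\ell_k:R_k\to R_\ell$, $X_{k,i}\mapsto X_{\ell,i}$; the ring homomorphism $\mathrm{res}^\ell_k:R_\ell\to R_k$, $\mathrm{res}^\ell_k(X_{\ell,i})=p^{\ell-k}X_{k,i}$ if $i\le k$ and $=p^{\ell-i}$ if $i\ge k$; and the multiplicative map $\mathrm{jnd}^\ell_k:R_k\to R_\ell$, $$\mathrm{jnd}^\ell_k\Big(\sum_{i=0}^k m_iX_{k,i}\Big)=m_kX_{\ell,\ell}+\sum_{k\le i<\ell}\frac{m_k^{p^{\ell-i}}-m_k^{p^{\ell-i-1}}}{p^{\ell-i}}X_{\ell,i}+\sum_{0\le i<k}\frac{(\sum_{s=i}^k m_sp^{k-s})^{p^{\ell-k}}-(\sum_{s=i+1}^k m_sp^{k-s})^{p^{\ell-k}}}{p^{\ell-i}}X_{\ell,i}$$ ($m_i\in\mathbb{Z}$). For $k=\ell$ these maps are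 the identity. These data form the Burnside Tambara functor on $\mathbb{Z}/p^r\mathbb{Z}$; keeping indices $\le n$ gives $\Omega_{H_n}$. An ideal of $\Omega_{H_n}$ is a sequence $[I_0,\dots,I_n]$ of ideals $I_k\subseteq R_k$ such that for every $1\le k\le n$: $\mathrm{ind}^k_{k-1}(I_{k-1})\subseteq I_k$, $\mathrm{res}^k_{k-1}(I_k)\subseteq I_{k-1}$, $\mathrm{jnd}^k_{k-1}(I_{k-1})\subseteq I_k$. It is proper if $I_0\ne R_0$. A proper ideal is prime if for all $0\le\ell\le k\le n$, $a\in R_k$, $b\in R_\ell$: whenever $(\mathrm{jnd}^m_i\mathrm{res}^k_i(a))\cdot(\mathrm{jnd}^m_j\mathrm{res}^\ell_j(b))\in I_m$ for all $0\le i\le k$, $0\le j\le\ell$, $m=\max(i,j)$, then $a\in I_k$ or $b\in I_\ell$. *)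

(* Defs.v *)
From HB Require Import structures.
From mathcomp Require Import all_boot all_order all_algebra.
Set Implicit Arguments. Unset Strict Implicit. Unset Printing Implicit Defensive.
Import Order.TTheory GRing.Theory Num.Theory.
Local Open Scope ring_scope.

(* R_k : free Z-module on X_{k,0},...,X_{k,k}; an element is its coefficient
   vector (m_0,...,m_k). *)
Definition R (k : nat) := {ffun 'I_k.+1 -> int}.

Definition cf (k : nat) (a : R k) (i : nat) : int :=
  if (i <= k)%N then a (inord i) else 0.

Definition addR (k : nat) (a b : R k) : R k := [ffun i => a i + b i].
Definition zeroR (k : nat) : R k := [ffun => 0].

(* the integer n, identified with n X_{k,k} *)
Definition intR (k : nat) (n : int) : R k :=
  [ffun i : 'I_k.+1 => if val i == k then n else 0].

(* X_{k,i} X_{k,j} = p^(k - max(i,j)) X_{k,min(i,j)}, extended bilinearly *)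
Definition mulR (p k : nat) (a b : R k) : R k :=
  [ffun m : 'I_k.+1 => \sum_(i < k.+1) \sum_(j < k.+1)
     (if minn i j == val m then a i * b j * (p%:Z) ^+ (k - maxn i j) else 0)].

Definition indR (k l : nat) (a : R k) : R l := [ffun i : 'I_l.+1 => cf a i].

(* res^l_k : X_{l,i} |-> p^(l-k) X_{k,i} (i <= k), p^(l-i) X_{k,k} (i >= k) *)
Definition resR (p l k : nat) (a : R l) : R k :=
  [ffun j : 'I_k.+1 =>
     if (j < k)%N then (p%:Z) ^+ (l - k) * cf a j
     else \sum_(k <= i < l.+1) (p%:Z) ^+ (l - i) * cf a i].

(* jnd^l_k, the multiplicative transfer (norm), as in the paper;
   the divisions are exact divisions of integers. *)
Definition jndR (p k l : nat) (a : R k) : R l :=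
  [ffun i : 'I_l.+1 =>
     if val i == l then cf a k
     else if (k <= i)%N then
       ((cf a k) ^+ (p ^ (l - i)) - (cf a k) ^+ (p ^ (l - i - 1)))
         %/ ((p%:Z) ^+ (l - i))
     else
       ((\sum_(i <= s < k.+1) cf a s * (p%:Z) ^+ (k - s)) ^+ (p ^ (l - k))
        - (\sum_(i.+1 <= s < k.+1) cf a s * (p%:Z) ^+ (k - s)) ^+ (p ^ (l - k)))
         %/ ((p%:Z) ^+ (l - i))]%Z.

Definition is_ring_ideal (p k : nat) (J : R k -> Prop) : Prop :=
  [/\ J (zeroR k),
      (forall a b, J a -> J b -> J (addR a b)) &
      (forall c a, J a -> J (mulR p c a))].

(* a sequence [I_0,...,I_n] of subsets I_k of R_k (values for k > n ignored) *)
Definition seq_ideal := forall k : nat, R k -> Prop.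

Definition is_tambara_ideal (p n : nat) (I : seq_ideal) : Prop :=
  (forall k, (k <= n)%N -> is_ring_ideal p (I k)) /\
  (forall k, (1 <= k <= n)%N ->
     (forall a : R k.-1, I k.-1 a -> I k (@indR k.-1 k a)) /\
     (forall a : R k, I k a -> I k.-1 (@resR p k k.-1 a)) /\
     (forall a : R k.-1, I k.-1 a -> I k (@jndR p k.-1 k a))).

Definition is_proper (I : seq_ideal) : Prop := ~ (forall a : R 0, I 0%N a).

Definition is_prime_tambara_ideal (p n : nat) (I : seq_ideal) : Prop :=
  [/\ is_tambara_ideal p n I, is_proper I &
   forall (k l : nat) (a : R k) (b : R l), (l <= k)%N -> (k <= n)%N ->
     (forall i j : nat, (i <= k)%N -> (j <= l)%N ->
        I (maxn i j) (mulR p (@jndR p i (maxn i j) (@resR p k i a))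
                             (@jndR p j (maxn i j) (@resR p l j b)))) ->
     I k a \/ I l b].

Definition principal (p : nat) (n : int) : seq_ideal :=
  fun k a => exists b : R k, a = mulR p (intR k n) b.

(* Main.v *)
Require Import Defs.
From HB Require Import structures.
From mathcomp Require Import all_boot all_order all_algebra all_field zify.
Set Implicit Arguments. Unset Strict Implicit. Unset Printing Implicit Defensive.
Import Order.TTheory GRing.Theory Num.Theory.
Local Open Scope ring_scope.

Lemma fermatz (p : nat) (m : int) : prime p -> (p%:Z %| m ^+ p - m)%Z.
Proof.
move=> pp.
rewrite (dvdz_pcharf (pchar_Fp pp)) rmorphB rmorphXn /=.
have := @expf_card _ (m%:~R : 'F_p). rewrite card_Fp // => ->.
by rewrite subrr.
Qed.

Lemma powstep (p e : nat) (a b : int) : prime p -> (0 < e)%N ->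
  (p%:Z ^+ e %| a - b)%Z -> (p%:Z ^+ e.+1 %| a ^+ p - b ^+ p)%Z.
Proof.
move=> pp e0 H; rewrite subrXX exprSr; apply: dvdz_mul => //.
have H1 : (p%:Z %| a - b)%Z by apply: dvdz_trans H; apply: dvdz_exp.
move: H1; rewrite !(dvdz_pcharf (pchar_Fp pp)) rmorphB /= subr_eq0 => /eqP Hab.
rewrite rmorph_sum /=.
rewrite (eq_bigr (fun _ => (b%:~R : 'F_p) ^+ p.-1)); last first.
  move=> i _; rewrite rmorphM !rmorphXn /= Hab -exprD subnK //.
  by rewrite -ltnS prednK ?prime_gt0.
rewrite sumr_const card_ord -mulr_natr.
by rewrite (pcharf0 (pchar_Fp pp)) mulr0 eqxx.
Qed.

Lemma divq (q d X : int) : coprimez q d -> (q %| X)%Z -> (d %| X)%Z -> (q %| (X %/ d)%Z)%Z.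
Proof.
by move=> c qX dX; move: qX; rewrite -{1}(divzK dX) Gauss_dvdzl.
Qed.

Lemma intRE k n (i : 'I_k.+1) : intR k n i = if val i == k then n else 0.
Proof. by rewrite /intR ffunE. Qed.

Lemma mulR_intR p k n (b : R k) : mulR p (intR k n) b = [ffun i => n * b i].
Proof.
apply/ffunP => m; rewrite !ffunE big_ord_recr /= big1 ?add0r.
  rewrite (bigD1 m) //= big1 ?addr0.
    rewrite intRE eqxx (minn_idPr (leq_ord m)) eqxx (maxn_idPl (leq_ord m)).
    by rewrite subnn expr0 mulr1.
  by move=> j jm; rewrite (minn_idPr (leq_ord j)) ifN.
move=> i _; apply: big1 => j _; rewrite intRE /=.
have -> : (i == k :> nat) = false by apply/negbTE; rewrite neq_ltn ltn_ord.
by rewrite !mul0r; case: ifP.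
Qed.

Definition Iq (q : nat) k (a : R k) : Prop := forall i : 'I_k.+1, (q%:Z %| a i)%Z.

Lemma prin_Iq p q k (a : R k) : @principal p q%:Z k a -> Iq q a.
Proof. by case=> b -> i; rewrite mulR_intR ffunE; apply: dvdz_mulr. Qed.

Lemma Iq_prin p q k (a : R k) : (0 < q)%N -> Iq q a -> @principal p q%:Z k a.
Proof.
move=> q0 H; exists [ffun i => (a i %/ q%:Z)%Z]; apply/ffunP => i.
by rewrite mulR_intR !ffunE mulrC divzK.
Qed.

Lemma cfq q k (a : R k) s : Iq q a -> (q%:Z %| cf a s)%Z.
Proof. by move=> H; rewrite /cf; case: ifP => _; [exact: H | exact: dvdz0]. Qed.

Lemma dvdz_sumI (d : int) (I : Type) (r : seq I) (P : pred I) (F : I -> int) :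
  (forall i, P i -> (d %| F i)%Z) -> (d %| \sum_(i <- r | P i) F i)%Z.
Proof. move=> H; apply: (big_ind (fun x => (d %| x)%Z)) => // x y; exact: rpredD. Qed.

Lemma copq p q e : prime p -> prime q -> q != p -> coprimez q%:Z (p%:Z ^+ e).
Proof.
move=> pp pq qp; apply: coprimezXr; rewrite coprimezE /=.
by rewrite prime_coprime // dvdn_prime2.
Qed.

Lemma ideal_q p q k : (0 < q)%N -> is_ring_ideal p (@principal p q%:Z k).
Proof.
move=> q0; split.
- by apply: Iq_prin => // i; rewrite /zeroR ffunE; exact: dvdz0.
- move=> a b /prin_Iq Ha /prin_Iq Hb; apply: Iq_prin => // i.
  by rewrite /addR ffunE; apply: rpredD.
- move=> c a /prin_Iq Ha; apply: Iq_prin => // i; rewrite /mulR ffunE.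
  apply: dvdz_sumI => j _; apply: dvdz_sumI => l _; case: ifP => _.
    by apply: dvdz_mulr; apply: dvdz_mull.
  exact: dvdz0.
Qed.

Lemma mulR_top p k (x y : R k) : mulR p x y ord_max = x ord_max * y ord_max.
Proof.
rewrite /mulR ffunE big_ord_recr /= big1 ?add0r.
  rewrite big_ord_recr /= big1 ?add0r.
    by rewrite minnn eqxx maxnn subnn expr0 mulr1.
  move=> j _; rewrite ifN //.
  by rewrite (minn_idPr (ltnW (ltn_ord j))) neq_ltn ltn_ord.
move=> i _; apply: big1 => j _; rewrite ifN //.
by rewrite neq_ltn (leq_ltn_trans (geq_minl _ _) (ltn_ord i)).
Qed.

Lemma cf_top k (y : R k) : cf y k = y ord_max.
Proof. by rewrite /cf leqnn; congr (y _); apply: val_inj; rewrite /= inordK. Qed.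

Lemma cf_ord k (y : R k) (i : 'I_k.+1) : cf y i = y i.
Proof. by rewrite /cf -ltnS ltn_ord inord_val. Qed.

Lemma jnd_top p i m (y : R i) : @jndR p i m y ord_max = cf y i.
Proof. by rewrite /jndR ffunE /= eqxx. Qed.

Definition phi p k (a : R k) (i : nat) : int :=
  \sum_(i <= s < k.+1) (p%:Z) ^+ (k - s) * cf a s.

Lemma res_top p k i (a : R k) : cf (@resR p k i a) i = phi p a i.
Proof. by rewrite cf_top /resR ffunE /= ltnn. Qed.

Lemma primez_mul q (x y : int) : prime q -> (q%:Z %| x * y)%Z ->
  (q%:Z %| x)%Z \/ (q%:Z %| y)%Z.
Proof. by move=> pq; rewrite !dvdzE abszM Euclid_dvdM //; case/orP; [left|right]. Qed.

Lemma allphi p q k (a : R k) : prime p -> prime q -> q != p ->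
  (forall i, (i <= k)%N -> (q%:Z %| phi p a i)%Z) -> Iq q a.
Proof.
move=> pp pq qp H.
suff S : forall d s, (s + d = k)%N -> (q%:Z %| cf a s)%Z.
  move=> i; rewrite -cf_ord; apply: (S (k - i)%N); rewrite subnKC //.
  by rewrite -ltnS.
move=> d; elim/ltn_ind: d => d IH s sd.
have hs : (s <= k)%N by rewrite -sd leq_addr.
have := H s hs.
rewrite /phi big_ltn; last by [].
rewrite rpredDr.
  by rewrite Gauss_dvdzr // copq.
rewrite big_nat_cond; apply: dvdz_sumI => t /andP [/andP [st tk] _].
apply: dvdz_mull; apply: (IH (k - t)%N).
  by rewrite -sd; lia.
by rewrite subnKC // -ltnS.
Qed.

Theorem proposition6 (p q r k : nat) :
  prime p -> prime q -> q != p -> (k <= r)%N ->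
  is_prime_tambara_ideal p k (principal p q%:Z).
Proof.
move=> pp pq qp _; have q0 := prime_gt0 pq.
split.
- split; first by move=> k' _; exact: ideal_q.
  move=> k' /andP [k1 _]; case: k' k1 => [//|K] _ /=.
  split; [|split].
  + move=> a /prin_Iq Ha; apply: Iq_prin => // i; rewrite /indR ffunE; exact: cfq.
  + move=> a /prin_Iq Ha; apply: Iq_prin => // i; rewrite /resR ffunE.
    case: ifP => _; first by apply: dvdz_mull; exact: cfq.
    by apply: dvdz_sumI => s _; apply: dvdz_mull; exact: cfq.
  + move=> a /prin_Iq Ha; apply: Iq_prin => // i; rewrite /jndR ffunE.
    case: eqP => [_|ne]; first exact: cfq.
    case: ifP => hKi.
      have ei : (i : nat) = K.
        apply/eqP; rewrite eqn_leq hKi andbT -ltnS ltn_neqAle (leq_ord i) andbT.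
        by apply/eqP.
      rewrite ei subSnn subnn expn1 expn0 expr1 expr1.
      apply: divq.
      * by have := copq 1 pp pq qp; rewrite expr1.
      * apply: rpredB; last exact: cfq.
        by apply: dvdz_exp; [exact: prime_gt0 | exact: cfq].
      * exact: fermatz.
    have iK : (i < K)%N by rewrite ltnNge hKi.
    rewrite subSnn expn1 (subSn (ltnW iK)).
    apply: divq; first exact: copq.
      by apply: rpredB; (apply: dvdz_exp; [exact: prime_gt0 |
        apply: dvdz_sumI => s _; apply: dvdz_mulr; exact: cfq]).
    apply: powstep => //; first by rewrite subn_gt0.
    rewrite (@big_ltn _ _ _ i K.+1) ?ltnS ?(ltnW iK) // addrK.
    by apply: dvdz_mull.
- move=> H; have := prin_Iq (H (intR 0 1)) ord0.
  rewrite intRE eqxx dvdz1 /=.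
  by move/eqP=> q1; move: (prime_gt1 pq); rewrite q1.
- move=> k0 l a b lk kn H.
  have top : forall i j, (i <= k0)%N -> (j <= l)%N ->
      (q%:Z %| phi p a i * phi p b j)%Z.
    move=> i j ik jl; have := prin_Iq (H i j ik jl) ord_max.
    by rewrite mulR_top !jnd_top !res_top.
  have [Ha|Ha] := boolP [forall i : 'I_k0.+1, q%:Z %| phi p a i]%Z.
    left; apply: Iq_prin => //; apply: (allphi pp pq qp) => i ik.
    by move/forallP: Ha => /(_ (Ordinal (ik : (i < k0.+1)%N))).
  right; apply: Iq_prin => //; apply: (allphi pp pq qp) => j jl.
  move/forallPn: Ha => [i0 Hi0].
  case: (primez_mul pq (top i0 j (leq_ord i0) jl)) => // Hi.
  by rewrite Hi in Hi0.
Qed.
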